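(* Let $p(x) \in \mathbb{R}[x]$ be a non-constant real-rooted polynomial. Let $P(x) = \int_0^x p(y)\,dy$ and let $C \in \mathbb{R}$. Then $P(x)+C$ is real-rooted if and only if for every root $\mu$ of $p(x)$ we have: $P(\mu)+C \geq 0$ if $p'(\mu) < 0$; $P(\mu)+C \leq 0$ if $p'(\mu) > 0$; and $P(\mu)+C = 0$ if $p'(\mu) = 0$.
   Context: A nonzero polynomial $p(x) \in \mathbb{R}[x]$ is called real-rooted if every complex root of $p(x)$ is real. $p'(x)$ denotes the derivative of $p(x)$. *)

(* Defs.v *)
From mathcomp Require Import all_boot all_order all_algebra all_reals.
From mathcomp Require Import complex.
Set Implicit Arguments. Unset Strict Implicit. Unset Printing Implicit Defensive.
Import Order.TTheory GRing.Theory Num.Theory.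
Local Open Scope ring_scope.

Definition real_rooted (R : rcfType) (p : {poly R}) : Prop :=
  p != 0 /\
  forall z : R[i], root (map_poly (fun x : R => x%:C%C) p) z -> complex.Im z = 0.

(* P(x) = \int_0^x p(y) dy, i.e. the antiderivative of p with P(0) = 0:
   coefficient i+1 of P is p_i / (i+1), constant coefficient 0. *)
Definition poly_prim (R : fieldType) (p : {poly R}) : {poly R} :=
  \poly_(i < (size p).+1) (if i is j.+1 then p`_j / (j.+1)%:R else 0).

(* Main.v *)
From Stdlib Require Import Classical_Prop.
Require Import Defs.
From mathcomp Require Import all_boot all_order all_algebra all_reals.
From mathcomp Require Import complex polyrcf.
From mathcomp Require Import ring lra.
Import Order.TTheory GRing.Theory Num.Theory.
Local Open Scope ring_scope.
Set Implicit Arguments. Unset Strict Implicit.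

Notation spl s := (\prod_(x <- s) ('X - x%:P)).

Lemma spl_nseq (R : rcfType) k (a : R) : spl (nseq k a) = ('X - a%:P) ^+ k.
Proof. by elim: k => [|k IH]; rewrite ?big_nil ?expr0 // big_cons IH exprS. Qed.

Lemma spl_cat (R : rcfType) (u v : seq R) : spl (u ++ v) = spl u * spl v.
Proof. by rewrite big_cat. Qed.

Lemma coprime_spl (R : rcfType) (u v : seq R) :
  (forall x, x \in u -> x \notin v) -> coprimep (spl u) (spl v).
Proof.
elim: v => [|y v IH] H; first by rewrite big_nil coprimep1.
rewrite big_cons coprimepMr coprimep_XsubC root_prod_XsubC; apply/andP; split.
  by apply/negP => /H; rewrite mem_head.
by apply: IH => x /H; rewrite in_cons negb_or => /andP[].
Qed.

Lemma dvd_spl_cat (R : rcfType) (u v : seq R) q :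
  (forall x, x \in u -> x \notin v) -> spl u %| q -> spl v %| q -> spl (u ++ v) %| q.
Proof.
by move=> H hu hv; rewrite spl_cat Gauss_dvdp ?coprime_spl ?hu.
Qed.

Lemma spl_root (R : rcfType) (s : seq R) q x : spl s %| q -> x \in s -> root q x.
Proof.
move=> hs xs; rewrite -dvdp_XsubCl; apply: dvdp_trans hs.
by rewrite dvdp_XsubCl root_prod_XsubC.
Qed.

Lemma D1 (R : rcfType) (a : R) k q :
  ('X - a%:P) ^+ k %| q -> ('X - a%:P) ^+ k.-1 %| q^`().
Proof.
case: k => [|k]; first by move=> _ /=; rewrite expr0 dvd1p.
move=> /dvdpP [g ->] /=; rewrite derivM deriv_exp derivXsubC mul1r.
apply: dvdp_add; first by rewrite exprS mulrA dvdp_mulIr.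
by apply: dvdp_mull; rewrite /= -mulr_natr dvdp_mulr.
Qed.

Lemma lift_aux (R : rcfType) (a : R) k : forall (c : nat) (h : {poly R}), (0 < c)%N ->
  ('X - a%:P) ^+ k %| h *+ c + ('X - a%:P) * h^`() -> ('X - a%:P) ^+ k %| h.
Proof.
elim: k => [|k IH] c h c0 H; first by rewrite expr0 dvd1p.
have rh : root h a.
  have : ('X - a%:P) %| h *+ c + ('X - a%:P) * h^`().
    by apply: dvdp_trans H; rewrite exprS dvdp_mulIl.
  rewrite dvdp_XsubCl /root !hornerE subrr mul0r addr0 hornerMn mulrn_eq0.
  by rewrite -(negbK (c == 0)%N) -lt0n c0.
have /factor_theorem [j hj] := rh.
have E : h *+ c + ('X - a%:P) * h^`() = ('X - a%:P) * (j *+ c.+1 + ('X - a%:P) * j^`()).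
  rewrite hj derivM derivXsubC mulr1 mulrS; ring.
rewrite E exprS dvdp_mul2l ?polyXsubC_eq0 // in H.
by rewrite hj exprS mulrC dvdp_mul2r ?polyXsubC_eq0 // (IH c.+1).
Qed.

Lemma lift (R : rcfType) (a : R) k q :
  root q a -> ('X - a%:P) ^+ k %| q^`() -> ('X - a%:P) ^+ k.+1 %| q.
Proof.
move=> /factor_theorem [g ->]; rewrite derivM derivXsubC mulr1 => H.
rewrite exprSr dvdp_mul2r ?polyXsubC_eq0 //; apply: (@lift_aux _ _ _ 1%N) => //.
by rewrite mulr1n [_ * g^`()]mulrC [g + _]addrC.
Qed.


Lemma seq_min (R : rcfType) (s : seq R) : s != [::] ->
  exists2 m, m \in s & forall x, x \in s -> m <= x.
Proof.
elim: s => // y s IH _.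
have [->|ns] := eqVneq s [::].
  by exists y => [|x]; rewrite ?mem_head // mem_seq1 => /eqP ->.
have [m ms mmin] := IH ns.
have [ym|my] := leP y m.
  exists y; first exact: mem_head.
  by move=> x; rewrite in_cons => /predU1P [->//|/mmin]; apply: le_trans.
exists m; first by rewrite in_cons ms orbT.
by move=> x; rewrite in_cons => /predU1P [->|/mmin //]; apply: ltW.
Qed.

Lemma seq_max (R : rcfType) (s : seq R) : s != [::] ->
  exists2 m, m \in s & forall x, x \in s -> x <= m.
Proof.
elim: s => // y s IH _.
have [->|ns] := eqVneq s [::].
  by exists y => [|x]; rewrite ?mem_head // mem_seq1 => /eqP ->.
have [m ms mmin] := IH ns.
have [ym|my] := leP m y.
  exists y; first exact: mem_head.
  by move=> x; rewrite in_cons => /predU1P [->//|/mmin] h; apply: le_trans h _.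
exists m; first by rewrite in_cons ms orbT.
by move=> x; rewrite in_cons => /predU1P [->|/mmin //]; apply: ltW.
Qed.

Lemma spl_seq1 (R : rcfType) (c : R) : spl [:: c] = 'X - c%:P.
Proof. by rewrite big_seq1. Qed.

Lemma GR (R : rcfType) n : forall (P : R -> Prop) (s : seq R) (q : {poly R}),
  (forall x y z, P x -> P z -> x <= y -> y <= z -> P y) ->
  (size s < n)%N -> (forall x, x \in s -> P x) -> spl s %| q ->
  exists t, [/\ size t = (size s).-1, (forall y, y \in t -> P y) & spl t %| q^`()].
Proof.
elim: n => [//|n IHn] P s q convP hs Ps hd.
have [->|sn0] := eqVneq s [::].
  by exists [::]; split => //; rewrite big_nil dvd1p.
have [m ms mmin] := seq_min sn0.
set s1 := filter (fun x => x <= m) s.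
set s2 := filter (predC (fun x => x <= m)) s.
have Hperm : perm_eq (s1 ++ s2) s by rewrite perm_filterC.
have Espl : spl s = spl s1 * spl s2 by rewrite -(perm_big _ Hperm) big_cat.
have s1E : s1 = nseq (size s1) m.
  apply/all_pred1P; apply/allP => x; rewrite mem_filter => /andP[xm xs].
  by rewrite /= eq_le xm mmin.
have m_s1 : m \in s1 by rewrite mem_filter lexx.
have sz : size s = (size s1 + size s2)%N by rewrite -(perm_size Hperm) size_cat.
have s1pos : (0 < size s1)%N.
  by rewrite lt0n size_eq0; apply/eqP => h; rewrite h in m_s1.
have d1 : ('X - m%:P) ^+ (size s1) %| q.
  by rewrite -spl_nseq -s1E; apply: dvdp_trans hd; rewrite Espl dvdp_mulIl.
have d2 : spl s2 %| q by apply: dvdp_trans hd; rewrite Espl dvdp_mulIr.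
have [s2E|s2n0] := eqVneq s2 [::].
  exists (nseq (size s1).-1 m); split.
  - by rewrite size_nseq sz s2E addn0.
  - by move=> y; rewrite mem_nseq => /andP[_ /eqP ->]; apply: Ps.
  - by rewrite spl_nseq; apply: D1.
have s2pos : (0 < size s2)%N by rewrite lt0n size_eq0.
have [m' m's2 m'min] := seq_min s2n0.
have mm' : m < m' by move: m's2; rewrite mem_filter /= -ltNge => /andP[].
have m's : m' \in s by move: m's2; rewrite mem_filter => /andP[].
have cP' : forall x y z, (P x /\ m' <= x) -> (P z /\ m' <= z) -> x <= y -> y <= z ->
    P y /\ m' <= y.
  move=> x y z [Px mx] [Pz mz] xy yz; split; first exact: (convP x y z).
  exact: le_trans xy.
have hs2 : (size s2 < n)%N.
  have h : ((size s2).+1 <= size s)%N by rewrite sz -add1n leq_add2r.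
  by rewrite ltnS in hs; apply: leq_trans hs.
have Ps2 : forall x, x \in s2 -> P x /\ m' <= x.
  move=> x xs2; split; last exact: m'min.
  by apply: Ps; move: xs2; rewrite mem_filter => /andP[].
have [t2 [st2 Pt2 dt2]] := IHn (fun x => P x /\ m' <= x) s2 q cP' hs2 Ps2 d2.
have [c cI qc] := @poly_rolle _ m m' q mm'
  (etrans (eqP (spl_root hd ms)) (esym (eqP (spl_root hd m's)))).
move: cI; rewrite in_itv /= => /andP[mc cm'].
exists (nseq (size s1).-1 m ++ c :: t2); split.
- rewrite size_cat size_nseq /= st2 sz.
  by case: (size s1) s1pos => // a _; case: (size s2) s2pos => // b _; rewrite /= addSn.
- move=> y; rewrite mem_cat in_cons mem_nseq => /orP[/andP[_ /eqP ->]|/orP[/eqP ->|/Pt2 []//]].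
    exact: Ps.
  by apply: (convP m c m') => //; [apply: Ps | apply: Ps | apply: ltW | apply: ltW].
- apply: dvd_spl_cat.
  + move=> x; rewrite mem_nseq => /andP[_ /eqP ->]; rewrite in_cons negb_or.
    rewrite (lt_eqF mc) /=; apply/negP => /Pt2 [_ h].
    by move: (lt_le_trans mm' h); rewrite ltxx.
  + by rewrite spl_nseq; apply: D1.
  rewrite -cat1s; apply: dvd_spl_cat.
  + move=> x; rewrite mem_seq1 => /eqP ->; apply/negP => /Pt2 [_ h].
    by move: (lt_le_trans cm' h); rewrite ltxx.
  + by rewrite spl_seq1 dvdp_XsubCl /root qc.
  exact: dt2.
Qed.


Lemma sg_neg (R : rcfType) (x : R) : Num.sg x = -1 -> x < 0.
Proof. by move=> h; rewrite -(sgr_cp0 x).1.2 h. Qed.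

Lemma sg_pos (R : rcfType) (x : R) : Num.sg x = 1 -> 0 < x.
Proof. by move=> h; rewrite -(sgr_cp0 x).1.1 h. Qed.

Lemma RR1 (R : rcfType) (q : {poly R}) : real_rooted q ->
  exists s, q = lead_coef q *: spl s.
Proof.
case=> qn0 H.
have H' : forall z, root (map_poly (real_complex R) q) z -> complex.Im z = 0 := H.
have [rs Hrs] := closed_field_poly_normal (map_poly (real_complex R) q).
have Hre : forall z, z \in rs -> z = (complex.Re z)%:C%C.
  move=> z zrs; have : root (map_poly (real_complex R) q) z.
    by rewrite Hrs rootZ ?root_prod_XsubC // lead_coef_eq0 map_poly_eq0.
  by move/H'; case: z {zrs} => a b /= ->.
exists (map (@complex.Re R) rs); apply: (map_poly_inj (real_complex R)).
rewrite map_polyZ rmorph_prod {1}Hrs lead_coef_map; congr (_ *: _).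
rewrite big_map; apply: eq_big_seq => z zrs; rewrite rmorphB /= map_polyX map_polyC /=.
by rewrite -Hre.
Qed.

Lemma RR2 (R : rcfType) (q : {poly R}) (s : seq R) :
  q != 0 -> spl s %| q -> (size q <= (size s).+1)%N -> real_rooted q.
Proof.
move=> qn0 hd hs; split => // z.
change (root (map_poly (real_complex R) q) z -> complex.Im z = 0).
have sz : size (spl s) = size q.
  by apply/eqP; rewrite eqn_leq dvdp_leq // size_prod_XsubC hs.
have /eqpP [[c1 c2] /andP [c1n c2n] E] : spl s %= q by rewrite -dvdp_size_eqp // sz.
move=> rz; have : root (map_poly (real_complex R) (c1 *: spl s)) z.
  by rewrite /= E map_polyZ rootZ ?fmorph_eq0.
rewrite map_polyZ rootZ ?fmorph_eq0 // rmorph_prod.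
rewrite (eq_bigr (fun x => 'X - (real_complex R x)%:P)); last first.
  by move=> x _; rewrite rmorphB /= map_polyX map_polyC.
by rewrite -(big_map (real_complex R) xpredT (fun x => 'X - x%:P)) root_prod_XsubC => /mapP [x _ ->].
Qed.

Lemma prim_deriv (R : rcfType) (p : {poly R}) : (poly_prim p)^`() = p.
Proof.
apply/polyP => i; rewrite coef_deriv /poly_prim coef_poly ltnS.
case: ltnP => h /=; last by rewrite mul0rn nth_default.
by rewrite -(mulr_natr (p`_i / i.+1%:R)) divfK // pnatr_eq0.
Qed.

Lemma PrimRel (R : rcfType) (p Q : {poly R}) : Q^`() = p -> p != 0 ->
  size Q = (size p).+1 /\ lead_coef p = lead_coef Q *+ size p.
Proof.
move=> HQ pn0.
have Qn0 : Q != 0 by apply: contraNneq pn0 => Q0; rewrite -HQ Q0 deriv0.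
have sp : (size p <= (size Q).-1)%N.
  apply/leq_sizeP => j hj; rewrite -HQ coef_deriv nth_default ?mul0rn //.
  by move: hj; case: (size Q).
have [m Em] : exists m, size Q = m.+2.
  move: sp Qn0; rewrite -size_poly_eq0; case: (size Q) => [//|[|m]] /=.
    by rewrite leqn0 size_poly_eq0 (negbTE pn0).
  by exists m.
rewrite Em /= in sp.
have cp : p`_m = lead_coef Q *+ m.+1 by rewrite -HQ coef_deriv lead_coefE Em.
have cpn0 : p`_m != 0 by rewrite cp mulrn_eq0 /= lead_coef_eq0.
have sp2 : size p = m.+1.
  apply/eqP; rewrite eqn_leq sp /=; rewrite ltnNge; apply/negP => h.
  by move: cpn0; rewrite nth_default // eqxx.
by split; rewrite ?Em ?sp2 // lead_coefE sp2 /= cp.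
Qed.

Lemma root_div (R : rcfType) (p : {poly R}) b : root p b ->
  p = (p %/ ('X - b%:P)) * ('X - b%:P) /\ p^`().[b] = (p %/ ('X - b%:P)).[b].
Proof.
move=> pb; have d : ('X - b%:P) %| p by rewrite dvdp_XsubCl.
have E := esym (divpK d); split => //.
rewrite {1}E derivM derivXsubC hornerD !hornerM hornerXsubC subrr mulr0 add0r.
by rewrite hornerC mulr1.
Qed.

Lemma NearR (R : rcfType) (p : {poly R}) b a : root p b -> p^`().[b] < 0 -> b < a ->
  exists y, [/\ b < y, y < a & p.[y] < 0].
Proof.
move=> pb hd ba; have [E d] := root_div pb; set g := p %/ _ in E d.
have gb : g.[b] < 0 by rewrite -d.
have gn0 : g != 0 by apply: contraTneq gb => ->; rewrite horner0 ltxx.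
have [y hy] := neighpr_wit ba gn0.
have sg := sgr_neighprN (ltr0_neq0 gb) hy.
move: hy; rewrite /neighpr in_itv /= => /andP [hby yn].
have hn := next_root_in g b a; rewrite in_itv /= (max_l (ltW ba)) in hn.
have ya : y < a by apply: lt_le_trans yn _; case/andP: hn.
exists y; split => //.
rewrite E hornerM hornerXsubC pmulr_llt0 ?subr_gt0 //.
by apply: sg_neg; rewrite sg ltr0_sg.
Qed.

Lemma NearL (R : rcfType) (p : {poly R}) b a : root p a -> p^`().[a] < 0 -> b < a ->
  exists z, [/\ b < z, z < a & 0 < p.[z]].
Proof.
move=> pa hd ba; have [E d] := root_div pa; set g := p %/ _ in E d.
have ga : g.[a] < 0 by rewrite -d.
have gn0 : g != 0 by apply: contraTneq ga => ->; rewrite horner0 ltxx.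
have [z hz] := neighpl_wit ba gn0.
have sg := sgr_neighplN (p := g) (a := b) (x := a) (ltr0_neq0 ga) hz.
move: hz; rewrite /neighpl in_itv /= => /andP [pz za].
have hn := prev_root_in g b a; rewrite in_itv /= (min_l (ltW ba)) in hn.
have bz : b < z by apply: le_lt_trans pz; case/andP: hn.
exists z; split => //.
rewrite E hornerM hornerXsubC nmulr_lgt0 ?subr_lt0 //.
by apply: sg_neg; rewrite sg ltr0_sg.
Qed.


Lemma too_many (R : rcfType) (p : {poly R}) t :
  p != 0 -> spl t %| p -> (size p <= size t)%N -> False.
Proof.
move=> pn0 hd hs; have := dvdp_leq pn0 hd; rewrite size_prod_XsubC => h.
by have := leq_trans h hs; rewrite ltnn.
Qed.

Lemma ExtraRoot (R : rcfType) (p Q : {poly R}) r mu : Q^`() = p -> r < mu -> root Q r ->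
  Q.[mu] < 0 -> root p mu -> p^`().[mu] < 0 -> exists y, [/\ r < y, y < mu & root p y].
Proof.
move=> HQ rmu rQ Qmu pmu hd.
have [xi xiI hm] := poly_mvt Q rmu; rewrite HQ (eqP rQ) subr0 in hm.
move: xiI; rewrite in_itv /= => /andP [rxi ximu].
have pxi : p.[xi] < 0 by rewrite -(pmulr_llt0 _ (_ : 0 < mu - r)) ?subr_gt0 // -hm.
have [E d] := root_div pmu; set g := p %/ _ in E d.
have gmu : g.[mu] < 0 by rewrite -d.
have gxi : 0 < g.[xi].
  by rewrite -(nmulr_llt0 _ (_ : xi - mu < 0)) ?subr_lt0 // -hornerXsubC -hornerM -E.
have gg : g.[xi] * g.[mu] < 0 by rewrite pmulr_rlt0.
have [y yI gy] := poly_ivtoo (ltW ximu) gg.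
move: yI; rewrite in_itv /= => /andP [xiy ymu]; exists y; split => //.
- exact: lt_trans xiy.
- by rewrite E rootM gy.
Qed.

Lemma split_count (R : rcfType) (s : seq R) (P : pred R) :
  let sL := filter P s in let sR := filter (predC P) s in
  spl s = spl sL * spl sR /\ size s = (size sL + size sR)%N.
Proof.
move=> sL sR; have Hperm : perm_eq (sL ++ sR) s by rewrite perm_filterC.
split; first by rewrite -(perm_big _ Hperm) big_cat.
by rewrite -(perm_size Hperm) size_cat.
Qed.

Lemma NecCore (R : rcfType) (p Q : {poly R}) s mu : Q^`() = p -> p != 0 -> spl s %| Q ->
  (size p <= size s)%N -> root p mu -> p^`().[mu] < 0 -> Q.[mu] < 0 -> False.
Proof.
move=> HQ pn0 hd hsz pmu hdm Qmu.
have mus : mu \notin s.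
  by apply/negP => /(spl_root hd) /eqP h; move: Qmu; rewrite h ltxx.
have [Espl sz] := split_count s (fun x => x < mu).
set sL := filter _ s in Espl sz; set sR := filter _ s in Espl sz.
have PL : forall x, x \in sL -> x < mu by move=> x; rewrite mem_filter => /andP[].
have PR : forall x, x \in sR -> mu < x.
  move=> x; rewrite mem_filter /= -leNgt => /andP[xm xs].
  rewrite lt_neqAle xm andbT; apply/negP => /eqP h; rewrite h xs in mus; by [].
have dL : spl sL %| Q by apply: dvdp_trans hd; rewrite Espl dvdp_mulIl.
have dR : spl sR %| Q by apply: dvdp_trans hd; rewrite Espl dvdp_mulIr.
have [tR [stR PtR dtR]] := @GR _ (size sR).+1 (fun x => mu < x) sR Q
   (fun x y z hx _ hxy _ => lt_le_trans hx hxy) (ltnSn _) PR dR.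
rewrite HQ in dtR.
have dA : spl ([:: mu] ++ tR) %| p.
  apply: dvd_spl_cat => //; last by rewrite spl_seq1 dvdp_XsubCl.
  by move=> x; rewrite mem_seq1 => /eqP ->; apply/negP => /PtR; rewrite ltxx.
have [sLE|sLn] := eqVneq sL [::].
  apply: (too_many pn0 dA); apply: leq_trans hsz _.
  by rewrite sz sLE /= stR leqSpred.
have [r rL rmax] := seq_max sLn.
have rmu : r < mu by apply: PL.
have [tL [stL PtL dtL]] := @GR _ (size sL).+1 (fun x => x <= r) sL Q
   (fun x y z _ hz _ hyz => le_trans hyz hz) (ltnSn _) rmax dL.
rewrite HQ in dtL.
have [y [ry ymu py]] := ExtraRoot HQ rmu (spl_root dL rL) Qmu pmu hdm.
have dB : spl ([:: y] ++ ([:: mu] ++ tR)) %| p.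
  apply: dvd_spl_cat => //; last by rewrite spl_seq1 dvdp_XsubCl.
  move=> x; rewrite mem_seq1 => /eqP ->; rewrite /= in_cons negb_or (lt_eqF ymu) /=.
  by apply/negP => /PtR h; move: (lt_trans ymu h); rewrite ltxx.
have dC : spl (tL ++ ([:: y] ++ ([:: mu] ++ tR))) %| p.
  apply: dvd_spl_cat => // x /PtL xr; rewrite /= !in_cons !negb_or.
  have xy : x < y by apply: le_lt_trans ry.
  rewrite (lt_eqF xy) (lt_eqF (lt_trans xy ymu)) /=.
  by apply/negP => /PtR h; move: (lt_trans (lt_trans xy ymu) h); rewrite ltxx.
apply: (too_many pn0 dC); apply: leq_trans hsz _.
have sLpos : (0 < size sL)%N by rewrite lt0n size_eq0.
rewrite sz size_cat /= stL stR.
case: (size sL) sLpos => // a _ /=.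
by rewrite addSn addnS ltnS leq_add2l leqSpred.
Qed.

Lemma NecCore3 (R : rcfType) (p Q : {poly R}) s mu : Q^`() = p -> p != 0 -> spl s %| Q ->
  (size p <= size s)%N -> root p mu -> p^`().[mu] = 0 -> Q.[mu] != 0 -> False.
Proof.
move=> HQ pn0 hd hsz pmu hdm Qmu.
have mus : mu \notin s.
  by apply/negP => /(spl_root hd) h; move: Qmu; rewrite -[_ != 0]/(~~ root Q mu) h.
have [Espl sz] := split_count s (fun x => x < mu).
set sL := filter _ s in Espl sz; set sR := filter _ s in Espl sz.
have PL : forall x, x \in sL -> x < mu by move=> x; rewrite mem_filter => /andP[].
have PR : forall x, x \in sR -> mu < x.
  move=> x; rewrite mem_filter /= -leNgt => /andP[xm xs].
  rewrite lt_neqAle xm andbT; apply/negP => /eqP h; rewrite h xs in mus; by [].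
have dL : spl sL %| Q by apply: dvdp_trans hd; rewrite Espl dvdp_mulIl.
have dR : spl sR %| Q by apply: dvdp_trans hd; rewrite Espl dvdp_mulIr.
have [tR [stR PtR dtR]] := @GR _ (size sR).+1 (fun x => mu < x) sR Q
   (fun x y z hx _ hxy _ => lt_le_trans hx hxy) (ltnSn _) PR dR.
have [tL [stL PtL dtL]] := @GR _ (size sL).+1 (fun x => x < mu) sL Q
   (fun x y z _ hz _ hyz => le_lt_trans hyz hz) (ltnSn _) PL dL.
rewrite HQ in dtR dtL.
have d2 : spl (nseq 2 mu) %| p.
  rewrite spl_nseq; apply: lift => //; rewrite expr1 dvdp_XsubCl /root hdm.
  by [].
have dA : spl (nseq 2 mu ++ tR) %| p.
  apply: dvd_spl_cat => // x; rewrite mem_nseq => /andP [_ /eqP ->].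
  by apply/negP => /PtR; rewrite ltxx.
have dC : spl (tL ++ (nseq 2 mu ++ tR)) %| p.
  apply: dvd_spl_cat => // x /PtL xm; rewrite mem_cat mem_nseq negb_or /= (lt_eqF xm) /=.
  by apply/negP => /PtR h; move: (lt_trans xm h); rewrite ltxx.
apply: (too_many pn0 dC); apply: leq_trans hsz _.
rewrite sz !size_cat size_nseq stL stR.
apply: leq_trans (leq_add (leqSpred _) (leqSpred _)) _.
by rewrite addSn add2n !addnS.
Qed.


Definition condQ (R : rcfType) (p Q : {poly R}) := forall mu, root p mu ->
  [/\ p^`().[mu] < 0 -> 0 <= Q.[mu], 0 < p^`().[mu] -> Q.[mu] <= 0 &
      p^`().[mu] = 0 -> Q.[mu] = 0].

Lemma condN (R : rcfType) (p Q : {poly R}) : condQ p Q -> condQ (-p) (-Q).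
Proof.
move=> H mu; rewrite rootN => /H [h1 h2 h3]; rewrite derivN !hornerN; split.
- by rewrite oppr_lt0 oppr_ge0 => /h2.
- by rewrite oppr_gt0 oppr_le0 => /h1.
- by move/eqP; rewrite oppr_eq0 => /eqP /h3 ->; rewrite oppr0.
Qed.

Lemma cond_nz (R : rcfType) (p Q : {poly R}) a : condQ p Q -> root p a -> Q.[a] != 0 ->
  p^`().[a] != 0.
Proof.
move=> H /H [_ _ h3] Qa; apply/negP => /eqP /h3 h; by rewrite h eqxx in Qa.
Qed.

Lemma cond_pos (R : rcfType) (p Q : {poly R}) a : condQ p Q -> root p a -> Q.[a] != 0 ->
  p^`().[a] < 0 -> 0 < Q.[a].
Proof. by move=> H /H [h1 _ _] Qa /h1; rewrite le_eqVlt eq_sym (negbTE Qa). Qed.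

Lemma cond_neg (R : rcfType) (p Q : {poly R}) a : condQ p Q -> root p a -> 0 < Q.[a] ->
  p^`().[a] < 0.
Proof.
move=> H pa Qa; have [_ h2 h3] := H a pa.
have [//|h|h] := ltrgtP (p^`().[a]) 0.
  by have := h2 h; rewrite leNgt Qa.
by move: Qa; rewrite h3 // ltxx.
Qed.

Lemma Gap (R : rcfType) (p Q : {poly R}) b a : Q^`() = p -> condQ p Q -> b < a ->
  root p b -> root p a -> (forall x, b < x -> x < a -> ~~ root p x) ->
  Q.[b] != 0 -> Q.[a] != 0 -> exists y, [/\ b < y, y < a & root Q y].
Proof.
move=> HQ cQ ba pb pa nr Qb Qa.
wlog hb : p Q HQ cQ pb pa nr Qb Qa / p^`().[b] < 0.
  move=> W; have nz := cond_nz cQ pb Qb.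
  have [h|h|h] := ltrgtP (p^`().[b]) 0; first exact: (W p Q HQ cQ pb pa nr Qb Qa h).
    have [y [h1 h2 h3]] : exists y, [/\ b < y, y < a & root (-Q) y].
      apply: (W (-p) (-Q)); rewrite ?derivN ?rootN ?hornerN ?oppr_eq0 ?HQ //.
      - exact: condN.
      - by move=> x bx xa; rewrite rootN nr.
      - by rewrite oppr_lt0.
    by exists y; split => //; rewrite -rootN.
  by move: nz; rewrite h eqxx.
have Qb' := cond_pos cQ pb Qb hb.
have [Qan|Qap|Qa0] := ltrgtP (Q.[a]) 0.
- have h : Q.[b] * Q.[a] < 0 by rewrite pmulr_rlt0.
  have [y yI Qy] := poly_ivtoo (ltW ba) h.
  by move: yI; rewrite in_itv /= => /andP [h1 h2]; exists y.
- have pa' := cond_neg cQ pa Qap.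
  have [y [hby ya py]] := NearR pb hb ba.
  have [z [yz za pz]] := NearL pa pa' ya.
  have h : p.[y] * p.[z] < 0 by rewrite nmulr_rlt0.
  have [w wI pw] := poly_ivtoo (ltW yz) h.
  move: wI; rewrite in_itv /= => /andP [yw wz].
  by move: (nr w (lt_trans hby yw) (lt_trans wz za)); rewrite pw.
- by move: Qa; rewrite Qa0 eqxx.
Qed.


Lemma sg1N1 (R : rcfType) : (1 : R) <> -1.
Proof. by move/eqP; rewrite -subr_eq0 opprK -mulr2n pnatr_eq0. Qed.

Lemma LeftInf (R : rcfType) (p Q : {poly R}) a : Q^`() = p -> p != 0 -> condQ p Q ->
  root p a -> (forall x, x < a -> ~~ root p x) -> Q.[a] != 0 ->
  exists y, y < a /\ root Q y.
Proof.
move=> HQ pn0 cQ pa nr Qa.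
wlog hd : p Q HQ pn0 cQ pa nr Qa / p^`().[a] < 0.
  move=> W; have nz := cond_nz cQ pa Qa.
  have [h|h|h] := ltrgtP (p^`().[a]) 0; first exact: (W p Q HQ pn0 cQ pa nr Qa h).
    have [y [h1 h2]] : exists y, y < a /\ root (-Q) y.
      apply: (W (-p) (-Q)); rewrite ?derivN ?rootN ?hornerN ?oppr_eq0 ?HQ //.
      - exact: condN.
      - by move=> x xa; rewrite rootN nr.
      - by rewrite oppr_lt0.
    by exists y; split => //; rewrite -rootN.
  by move: nz; rewrite h eqxx.
have Qa' := cond_pos cQ pa Qa hd.
have a1 : a - 1 < a by rewrite ltrBlDr ltrDl ltr01.
have [z [_ za pz]] := NearL pa hd a1.
have spz : Num.sg p.[z] = sgp_minfty p.
  apply: (@sgp_minftyP _ z p); last by rewrite in_itv /= lexx.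
  by move=> x; rewrite in_itv /= => xz; apply: nr; apply: le_lt_trans za.
rewrite gtr0_sg // /sgp_minfty in spz.
have [sQ lc] := PrimRel HQ pn0.
apply: NNPP => nE.
have sQa : Num.sg Q.[a] = sgp_minfty Q.
  apply: (@sgp_minftyP _ a Q); last by rewrite in_itv /= lexx.
  move=> x; rewrite in_itv /= le_eqVlt => /orP [/eqP ->|xa] //.
  by apply/negP => rx; apply: nE; exists x.
rewrite gtr0_sg // /sgp_minfty sQ /= in sQa.
have [k sk] : exists k, size p = k.+1.
  by move: pn0; rewrite -size_poly_eq0; case: (size p) => // k _; exists k.
move: spz sQa; rewrite lc sk /= mulrnAr => h1 h2.
have w0 : 0 < (-1) ^+ k * lead_coef Q.
  by rewrite -(pmulrn_lgt0 _ (ltn0Sn k)); apply: sg_pos; rewrite -h1.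
have : Num.sg ((-1) ^+ k.+1 * lead_coef Q) = -1.
  by rewrite exprS mulN1r mulNr ltr0_sg // oppr_lt0.
by rewrite -h2 => /sg1N1.
Qed.

Lemma RightInf (R : rcfType) (p Q : {poly R}) a : Q^`() = p -> p != 0 -> condQ p Q ->
  root p a -> (forall x, a < x -> ~~ root p x) -> Q.[a] != 0 ->
  exists y, a < y /\ root Q y.
Proof.
move=> HQ pn0 cQ pa nr Qa.
wlog hd : p Q HQ pn0 cQ pa nr Qa / p^`().[a] < 0.
  move=> W; have nz := cond_nz cQ pa Qa.
  have [h|h|h] := ltrgtP (p^`().[a]) 0; first exact: (W p Q HQ pn0 cQ pa nr Qa h).
    have [y [h1 h2]] : exists y, a < y /\ root (-Q) y.
      apply: (W (-p) (-Q)); rewrite ?derivN ?rootN ?hornerN ?oppr_eq0 ?HQ //.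
      - exact: condN.
      - by move=> x xa; rewrite rootN nr.
      - by rewrite oppr_lt0.
    by exists y; split => //; rewrite -rootN.
  by move: nz; rewrite h eqxx.
have Qa' := cond_pos cQ pa Qa hd.
have a1 : a < a + 1 by rewrite ltrDl ltr01.
have [z [az _ pz]] := NearR pa hd a1.
have spz : Num.sg p.[z] = sgp_pinfty p.
  apply: (@sgp_pinftyP _ z p); last by rewrite in_itv /= lexx.
  by move=> x; rewrite in_itv /= andbT => xz; apply: nr; apply: lt_le_trans xz.
rewrite ltr0_sg // /sgp_pinfty in spz.
have [sQ lc] := PrimRel HQ pn0.
have lp : lead_coef p < 0 by apply: sg_neg; rewrite -spz.
have lQ : lead_coef Q < 0.
  rewrite -(pmulrn_llt0 _ (_ : 0 < size p)%N) -?lc // lt0n size_poly_eq0 //.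
apply: NNPP => nE.
have sQa : Num.sg Q.[a] = sgp_pinfty Q.
  apply: (@sgp_pinftyP _ a Q); last by rewrite in_itv /= lexx.
  move=> x; rewrite in_itv /= andbT le_eqVlt => /orP [/eqP <-|xa] //.
  by apply/negP => rx; apply: nE; exists x.
move: sQa; rewrite gtr0_sg // /sgp_pinfty ltr0_sg //; exact: sg1N1.
Qed.


Lemma count_lt_le (R : rcfType) (u : seq R) a :
  count (fun x : R => (x <= a)%R) u = (count (fun x : R => (x < a)%R) u + count_mem a u)%N.
Proof.
elim: u => //= x u ->; case: (ltgtP x a) => //= _.
by rewrite add0n addnCA.
Qed.



Lemma sub_count_lt (T : eqType) (P Q : pred T) (u : seq T) x0 :
  (forall x, P x -> Q x) -> x0 \in u -> Q x0 -> ~~ P x0 -> (count P u < count Q u)%N.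
Proof.
move=> PQ; elim: u => //= y u IH; rewrite in_cons => /orP [/eqP <-|xu] Qx Px.
  rewrite (negbTE Px) Qx add0n add1n ltnS; exact: sub_count.
apply: leq_trans (_ : (P y + count Q u)%N <= _)%N.
  by rewrite -addnS leq_add2l; exact: IH.
by rewrite leq_add2r; case: (P y) (PQ y) => //= ->.
Qed.

Lemma Sweep (R : rcfType) (p Q : {poly R}) u : Q^`() = p -> p != 0 -> condQ p Q ->
  p = lead_coef p *: spl u ->
  forall k a, (count (fun x : R => (x < a)%R) u <= k)%N -> a \in u ->
  exists s, [/\ spl s %| Q, (forall x, x \in s -> x <= a) &
     (count (fun x : R => (x <= a)%R) u + (Q.[a] == 0%R) <= size s)%N].
Proof.
move=> HQ pn0 cQ Ep.
have lpn0 : lead_coef p != 0 by rewrite lead_coef_eq0.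
have rootE : forall x, root p x = (x \in u).
  by move=> x; rewrite Ep rootZ // root_prod_XsubC.
have F1 : forall a, ('X - a%:P) ^+ (count_mem a u) %| p.
  move=> a; rewrite Ep dvdpZr // -mup_geq ?mu_prod_XsubC //.
  exact: monic_neq0 (monic_prod_XsubC _ _ _).
have F3 : forall a, p^`().[a] != 0 -> (count_mem a u <= 1)%N.
  move=> a hd; rewrite leqNgt; apply/negP => h.
  have := D1 (dvdp_trans (dvdp_exp2l ('X - a%:P) h) (F1 a)).
  by rewrite /= expr1 dvdp_XsubCl /root (negbTE hd).
have base : forall a, a \in u -> (forall x, x \in u -> ~~ (x < a)) ->
  exists s, [/\ spl s %| Q, (forall x, x \in s -> x <= a) &
     (count (fun x : R => (x <= a)%R) u + (Q.[a] == 0%R) <= size s)%N].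
  move=> a au nl.
  have pa : root p a by rewrite rootE.
  have ce : count (fun x : R => (x <= a)%R) u = count_mem a u.
    rewrite count_lt_le; have -> : count (fun x : R => (x < a)%R) u = 0%N.
      by rewrite (@eq_in_count _ _ pred0) ?count_pred0 // => x /nl /negbTE.
    by [].
  have [Qa0|Qan] := eqVneq Q.[a] 0.
  - exists (nseq (count_mem a u).+1 a); split.
    + by rewrite spl_nseq; apply: lift; rewrite ?HQ ?F1 // /root Qa0.
    + by move=> x; rewrite mem_nseq => /andP [_ /eqP ->].
    + by rewrite ce size_nseq addn1.
  - have nr : forall x, x < a -> ~~ root p x.
      by move=> x xa; rewrite rootE; apply/negP => /nl; rewrite xa.
    have [y [ya Qy]] := LeftInf HQ pn0 cQ pa nr Qan.
    exists [:: y]; split.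
    + by rewrite spl_seq1 dvdp_XsubCl.
    + by move=> x; rewrite mem_seq1 => /eqP ->; apply: ltW.
    + by rewrite ce addn0 /=; apply: F3; exact: cond_nz cQ pa Qan.
elim=> [|k IH] a hk au.
  apply: base => // x xu; apply/negP => xa.
  move: hk; rewrite leqn0 => /eqP h.
  have : has (fun x : R => (x < a)%R) u by apply/hasP; exists x.
  by rewrite has_count h.
set L := filter (fun x : R => (x < a)%R) u.
have [L0|Ln] := eqVneq L [::].
  apply: base => // x xu; apply/negP => xa.
  have : x \in L by rewrite mem_filter xa xu.
  by rewrite L0.
have [b bL bmax] := seq_max Ln.
move: (bL); rewrite mem_filter => /andP [ba bu].
have hb : (count (fun x : R => (x < b)%R) u <= k)%N.
  have h := @sub_count_lt _ (fun x : R => (x < b)%R) (fun x : R => (x < a)%R) u b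
    (fun x xb => lt_trans xb ba) bu ba (negbT (ltxx b)).
  by rewrite -ltnS; apply: leq_trans h hk.
have [sb [dsb psb csb]] := IH b hb bu.
have cb : count (fun x : R => (x <= b)%R) u = count (fun x : R => (x < a)%R) u.
  apply: eq_in_count => x xu /=; apply/idP/idP => h.
    exact: le_lt_trans h ba.
  by apply: bmax; rewrite mem_filter h xu.
have pa : root p a by rewrite rootE.
have pb : root p b by rewrite rootE.
rewrite count_lt_le.
have [Qa0|Qan] := eqVneq Q.[a] 0.
  exists (sb ++ nseq (count_mem a u).+1 a); split.
  - apply: dvd_spl_cat.
    + move=> x xs; rewrite mem_nseq negb_and; apply/orP; right.
      by rewrite (lt_eqF (le_lt_trans (psb x xs) ba)).
    + exact: dsb.
    + by rewrite spl_nseq; apply: lift; rewrite ?HQ ?F1 // /root Qa0.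
  - move=> x; rewrite mem_cat mem_nseq => /orP [/psb xb|/andP [_ /eqP ->]] //.
    exact: (le_trans xb (ltW ba)).
  - rewrite size_cat size_nseq -cb /= addn1 addnS ltnS leq_add2r.
    by apply: leq_trans csb; exact: leq_addr.
have m1 : (count_mem a u <= 1)%N := F3 a (cond_nz cQ pa Qan).
have [Qb0|Qbn] := eqVneq Q.[b] 0.
  exists sb; split => //.
  - by move=> x /psb xb; exact: (le_trans xb (ltW ba)).
  - rewrite addn0 -cb; apply: leq_trans csb.
    by rewrite Qb0 eqxx leq_add2l.
have nr : forall x, b < x -> x < a -> ~~ root p x.
  move=> x bx xa; rewrite rootE; apply/negP => xu.
  have := bmax x; rewrite mem_filter xa xu => /(_ isT).
  by rewrite leNgt bx.
have [y [hby ya Qy]] := Gap HQ cQ ba pb pa nr Qbn Qan.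
exists ([:: y] ++ sb); split.
- apply: dvd_spl_cat => //; last by rewrite spl_seq1 dvdp_XsubCl.
  move=> x; rewrite mem_seq1 => /eqP ->; apply/negP => /psb h.
  by move: (lt_le_trans hby h); rewrite ltxx.
- move=> x; rewrite mem_cat mem_seq1 => /orP [/eqP ->|/psb xb]; first exact: ltW.
  exact: (le_trans xb (ltW ba)).
- rewrite addn0 -cb /=.
  move: csb; rewrite (negbTE Qbn) addn0 => csb.
  by apply: leq_trans (leq_add csb m1) _; rewrite addn1.
Qed.

Lemma Suff (R : rcfType) (p Q : {poly R}) : Q^`() = p -> p != 0 -> condQ p Q ->
  real_rooted p -> (1 < size p)%N -> real_rooted Q.
Proof.
move=> HQ pn0 cQ hp sp.
have [u Ep] := RR1 hp.
have su : size p = (size u).+1.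
  by rewrite {1}Ep size_scale ?lead_coef_eq0 // size_prod_XsubC.
have un : u != [::] by apply/eqP => u0; rewrite su u0 in sp.
have [a au amax] := seq_max un.
have [s [ds ps cs]] := Sweep HQ pn0 cQ Ep (count_size _ u) au.
have ca : count (fun x : R => (x <= a)%R) u = size u.
  by rewrite (@eq_in_count _ _ predT) ?count_predT // => x /amax.
have [sQ _] := PrimRel HQ pn0.
have Qn0 : Q != 0 by rewrite -size_poly_eq0 sQ.
have [Qa0|Qan] := eqVneq Q.[a] 0.
  apply: (RR2 Qn0 ds); rewrite sQ su ltnS.
  by move: cs; rewrite ca Qa0 eqxx addn1.
have nr : forall x, a < x -> ~~ root p x.
  move=> x ax; rewrite Ep rootZ ?lead_coef_eq0 // root_prod_XsubC.
  by apply/negP => /amax; rewrite leNgt ax.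
have pa : root p a by rewrite Ep rootZ ?lead_coef_eq0 // root_prod_XsubC.
have [y [ay Qy]] := RightInf HQ pn0 cQ pa nr Qan.
apply: (@RR2 _ Q ([:: y] ++ s) Qn0).
  apply: dvd_spl_cat => //; last by rewrite spl_seq1 dvdp_XsubCl.
  move=> x; rewrite mem_seq1 => /eqP ->; apply/negP => /ps h.
  by move: (lt_le_trans ay h); rewrite ltxx.
by rewrite sQ su /= !ltnS; move: cs; rewrite ca (negbTE Qan) addn0.
Qed.

Unset Implicit Arguments.

Theorem lemma2p5 (R : realType) (p : {poly R}) (C : R) :
  (1 < size p)%N -> real_rooted p ->
  (real_rooted (poly_prim p + C%:P) <->
   forall mu : R, root p mu ->
     [/\ (p^`()).[mu] < 0 -> 0 <= (poly_prim p).[mu] + C,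
         (p^`()).[mu] > 0 -> (poly_prim p).[mu] + C <= 0 &
         (p^`()).[mu] = 0 -> (poly_prim p).[mu] + C = 0]).
Proof.
move=> sp hp; set Q := poly_prim p + C%:P.
have HQ : Q^`() = p by rewrite derivD prim_deriv derivC addr0.
have pn0 : p != 0 by rewrite -size_poly_eq0; case: (size p) sp.
have QE : forall x, Q.[x] = (poly_prim p).[x] + C by move=> x; rewrite hornerD hornerC.
split.
- move=> hQ mu pmu; have [s Es] := RR1 hQ.
  have Qn0 : Q != 0 by case: hQ.
  have ds : spl s %| Q by rewrite [X in _ %| X]Es dvdpZr ?lead_coef_eq0.
  have [sQ _] := PrimRel HQ pn0.
  have ss : (size p <= size s)%N.
    by move: sQ; rewrite {1}Es size_scale ?lead_coef_eq0 // size_prod_XsubC => [[->]].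
  rewrite -!QE; split.
  + move=> hd; rewrite leNgt; apply/negP => Qn.
    exact: (NecCore HQ pn0 ds ss pmu hd Qn).
  + move=> hd; rewrite leNgt; apply/negP => Qp.
    apply: (@NecCore _ (-p) (-Q) s mu); rewrite ?derivN ?HQ ?oppr_eq0 ?dvdpNr ?size_polyN ?rootN ?hornerN ?oppr_lt0 //.
  + move=> hd; case: (eqVneq Q.[mu] 0) => // hn; exfalso.
    exact: (NecCore3 HQ pn0 ds ss pmu hd hn).
- move=> H; apply: (Suff HQ pn0 _ hp sp) => mu /H.
  by rewrite -!QE.
Qed.
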